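(* Let $L>0$, let $p_{\rm ext}\in\mathbb{R}$ be a constant, and let $\bar\ell:\mathcal{U}\to\mathbb{R}$ be a smooth function of four real variables, defined on an open set $\mathcal{U}\subset\mathbb{R}^4$ and written $\bar\ell=\bar\ell(A,A_t,A_s,u)$ (it does not depend explicitly on $s$ or $t$). Let $A,u,p$ be smooth real functions of $(s,t)\in(\mathbb{R}/L\mathbb{Z})\times I$, $I$ an open time interval, with $(A,A_t,A_s,u)(s,t)\in\mathcal{U}$, satisfying $$\partial_t \frac{\partial\bar\ell}{\partial u}+u\,\partial_s\frac{\partial\bar\ell}{\partial u}+2\frac{\partial\bar\ell}{\partial u}\,\partial_s u=-A\,\partial_s p,$$ $$\partial_t\frac{\partial\bar\ell}{\partial A_t}+\partial_s\frac{\partial\bar\ell}{\partial A_s}-\frac{\partial\bar\ell}{\partial A}=p-p_{\rm ext},$$ $$\partial_t A+\partial_s(Au)=0,$$ where all partial derivatives of $\bar\ell$ are evaluated at $(A(s,t),\partial_tA(s,t),\partial_sA(s,t),u(s,t))$. Then the quantity $$E(t)=\int_0^L\Big(\frac{\partial\bar\ell}{\partial A_t}\,\partial_tA+\frac{\partial\bar\ell}{\partial u}\,u-\bar\ell\Big)\,\mathrm{d}s$$ is independent of $t\in I$.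
   Context: This system models an inextensible, unshearable fluid-conveying tube with straight centerline: $s$ is the coordinate along the tube, $A(s,t)$ the cross-sectional area, $u(s,t)$ the fluid velocity, $p$ the fluid pressure (Lagrange multiplier for incompressibility), $p_{\rm ext}$ the external pressure, and $\bar\ell$ the Lagrangian density (with the swirl circulation frozen at a constant value). Periodic boundary conditions in $s$ are assumed. *)

(* Defs.v *)
From Stdlib Require Import Reals ClassicalEpsilon.
Open Scope R_scope.

(* The derivative of a real function of one variable at x (the unique l with
   derivable_pt_lim f x l when it exists; an unspecified value otherwise). *)
Definition Dr (f : R -> R) (x : R) : R :=
  epsilon (inhabits 0) (fun l => derivable_pt_lim f x l).

(* Functions of n real variables are encoded as maps (nat -> R) -> R that
   only read coordinates 0..n-1. *)
Definition upd (x : nat -> R) (i : nat) (h : R) : nat -> R :=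
  fun j => if Nat.eqb j i then h else x j.

Definition pd (i : nat) (f : (nat -> R) -> R) (x : nat -> R) : R :=
  Dr (fun h => f (upd x i h)) (x i).

Definition has_pd (i : nat) (f : (nat -> R) -> R) (x : nat -> R) : Prop :=
  exists l, derivable_pt_lim (fun h => f (upd x i h)) (x i) l.

Definition cont_on (n : nat) (U : (nat -> R) -> Prop) (f : (nat -> R) -> R) : Prop :=
  forall x, U x -> forall eps, eps > 0 -> exists delta, delta > 0 /\
    forall y, U y -> (forall i, (i < n)%nat -> Rabs (y i - x i) < delta) ->
      Rabs (f y - f x) < eps.

Fixpoint Ck (n : nat) (U : (nat -> R) -> Prop) (k : nat) (f : (nat -> R) -> R) : Prop :=
  cont_on n U f /\
  match k with
  | O => True
  | S k' => forall i, (i < n)%nat ->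
              (forall x, U x -> has_pd i f x) /\ Ck n U k' (pd i f)
  end.

Definition smooth_on (n : nat) (U : (nat -> R) -> Prop) (f : (nat -> R) -> R) : Prop :=
  forall k, Ck n U k f.

Definition vec4 (a b c d : R) : nat -> R :=
  fun j => match j with 0%nat => a | 1%nat => b | 2%nat => c | _ => d end.
Definition fun4 (g : R -> R -> R -> R -> R) : (nat -> R) -> R :=
  fun x => g (x 0%nat) (x 1%nat) (x 2%nat) (x 3%nat).
Definition pred4 (U : R -> R -> R -> R -> Prop) : (nat -> R) -> Prop :=
  fun x => U (x 0%nat) (x 1%nat) (x 2%nat) (x 3%nat).

Definition open4 (U : R -> R -> R -> R -> Prop) : Prop :=
  forall a b c d, U a b c d -> exists delta, delta > 0 /\
    forall a' b' c' d', Rabs (a' - a) < delta -> Rabs (b' - b) < delta ->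
      Rabs (c' - c) < delta -> Rabs (d' - d) < delta -> U a' b' c' d'.

(* i-th partial derivative of a 4-variable function, as a 4-variable function
   (i = 0: d/dA, 1: d/dA_t, 2: d/dA_s, 3: d/du) *)
Definition lpd (i : nat) (g : R -> R -> R -> R -> R) : R -> R -> R -> R -> R :=
  fun a b c d => pd i (fun4 g) (vec4 a b c d).

Definition fun2 (F : R -> R -> R) : (nat -> R) -> R := fun x => F (x 0%nat) (x 1%nat).
Definition strip (I : R -> Prop) : (nat -> R) -> Prop := fun x => I (x 1%nat).

Definition ds (F : R -> R -> R) (s t : R) : R := Dr (fun s' => F s' t) s.
Definition dt (F : R -> R -> R) (s t : R) : R := Dr (fun t' => F s t') t.

Definition open_itv (I : R -> Prop) : Prop :=
  (exists t, I t) /\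
  (forall x y z, I x -> I z -> x <= y <= z -> I y) /\
  (forall t, I t -> exists delta, delta > 0 /\ forall t', Rabs (t' - t) < delta -> I t').

Definition along (g : R -> R -> R -> R -> R) (A u : R -> R -> R) : R -> R -> R :=
  fun s t => g (A s t) (dt A s t) (ds A s t) (u s t).

(* Main.v *)
Require Import Defs.
From Stdlib Require Import Reals Lra Lia ClassicalEpsilon.
From Coquelicot Require Import Coquelicot.
Open Scope R_scope.


Lemma Dr_spec f x l : derivable_pt_lim f x l -> Dr f x = l.
Proof.
  intros H. unfold Dr.
  apply (uniqueness_limite f x); [|exact H].
  apply (epsilon_spec (inhabits 0) (fun l => derivable_pt_lim f x l)).
  exists l; exact H.
Qed.

Lemma dpl_Dr f x l : derivable_pt_lim f x l -> derivable_pt_lim f x (Dr f x).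
Proof. intros H; rewrite (Dr_spec f x l H); exact H. Qed.

Lemma MVT_gen (f f' : R -> R) x y :
  (forall c, Rabs (c - x) <= Rabs (y - x) -> derivable_pt_lim f c (f' c)) ->
  exists c, Rabs (c - x) <= Rabs (y - x) /\ f y - f x = f' c * (y - x).
Proof.
  intros Hd. destruct (Rtotal_order x y) as [H|[H|H]].
  - destruct (MVT_cor2 f f' x y H) as [c [Hc1 Hc2]].
    { intros c Hc; apply Hd. rewrite !Rabs_right; lra. }
    exists c; split; [rewrite !Rabs_right; lra| exact Hc1].
  - subst; exists y; split; [right; reflexivity| ring].
  - destruct (MVT_cor2 f f' y x H) as [c [Hc1 Hc2]].
    { intros c Hc; apply Hd. rewrite !Rabs_left1; lra. }
    exists c; split; [rewrite !Rabs_left1; lra| lra].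
Qed.

Lemma chainK (Kf Kx : R -> R -> R) (a : R -> R) t0 a' m r :
 r > 0 ->
 (forall x t, Rabs (x - a t0) < r -> Rabs (t - t0) < r ->
    derivable_pt_lim (fun z => Kf z t) x (Kx x t)) ->
 (forall eps, eps > 0 -> exists d, d > 0 /\ forall x t, Rabs (x - a t0) < d ->
    Rabs (t - t0) < d -> Rabs (Kx x t - Kx (a t0) t0) < eps) ->
 derivable_pt_lim a t0 a' ->
 derivable_pt_lim (fun t => Kf (a t0) t) t0 m ->
 derivable_pt_lim (fun t => Kf (a t) t) t0 (Kx (a t0) t0 * a' + m).
Proof.
  intros Hr HK HKc Ha Hm eps Heps.
  set (D := Kx (a t0) t0).
  assert (Ha1 : Rabs a' + 1 > 0) by (pose proof (Rabs_pos a'); lra).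
  assert (HD1 : Rabs D + 1 > 0) by (pose proof (Rabs_pos D); lra).
  set (e1 := eps / (3 * (Rabs a' + 1))).
  set (e2 := Rmin 1 (eps / (3 * (Rabs D + 1)))).
  assert (He1 : e1 > 0) by (unfold e1; apply Rdiv_lt_0_compat; lra).
  assert (He2 : e2 > 0) by (unfold e2; apply Rmin_pos; [lra|apply Rdiv_lt_0_compat; lra]).
  destruct (HKc e1 He1) as [d1 [Hd1 Hc1]].
  destruct (Ha e2 He2) as [da Hda].
  destruct (Hm (eps/3) ltac:(lra)) as [dm Hdm].
  set (r1 := Rmin d1 r).
  assert (Hr1 : r1 > 0) by (unfold r1; apply Rmin_pos; lra).
  assert (Hr1' : r1 / (Rabs a' + 1) > 0) by (apply Rdiv_lt_0_compat; lra).
  assert (Hdel : 0 < Rmin (Rmin da dm) (Rmin r1 (r1 / (Rabs a' + 1)))).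
  { apply Rmin_pos; apply Rmin_pos; try apply cond_pos; lra. }
  exists (mkposreal _ Hdel). intros h Hh0 Hh. simpl in Hh.
  assert (Hh1 : Rabs h < da) by (eapply Rlt_le_trans; [exact Hh|];
     eapply Rle_trans; apply Rmin_l).
  assert (Hh2 : Rabs h < dm) by (eapply Rlt_le_trans; [exact Hh|];
     eapply Rle_trans; [apply Rmin_l|apply Rmin_r]).
  assert (Hh3 : Rabs h < r1) by (eapply Rlt_le_trans; [exact Hh|];
     eapply Rle_trans; [apply Rmin_r|apply Rmin_l]).
  assert (Hh4 : Rabs h < r1 / (Rabs a' + 1)) by (eapply Rlt_le_trans; [exact Hh|];
     eapply Rle_trans; [apply Rmin_r|apply Rmin_r]).
  assert (Hr1d : r1 <= d1) by apply Rmin_l.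
  assert (Hr1r : r1 <= r) by apply Rmin_r.
  specialize (Hda h Hh0 Hh1). specialize (Hdm h Hh0 Hh2).
  set (q := (a (t0 + h) - a t0) / h) in *.
  assert (He2l : e2 <= 1) by apply Rmin_l.
  assert (He2r : e2 <= eps / (3 * (Rabs D + 1))) by apply Rmin_r.
  assert (Hq : Rabs q < Rabs a' + 1).
  { replace q with ((q - a') + a') by ring.
    eapply Rle_lt_trans; [apply Rabs_triang|]. lra. }
  assert (Hdiff : Rabs (a (t0 + h) - a t0) < r1).
  { replace (a (t0 + h) - a t0) with (q * h) by (unfold q; field; exact Hh0).
    rewrite Rabs_mult.
    apply Rlt_le_trans with ((Rabs a' + 1) * Rabs h).
    - apply Rmult_lt_compat_r; [apply Rabs_pos_lt; exact Hh0| exact Hq].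
    - apply Rmult_le_reg_r with (/ (Rabs a' + 1)); [apply Rinv_0_lt_compat; lra|].
      replace ((Rabs a' + 1) * Rabs h * / (Rabs a' + 1)) with (Rabs h) by (field; lra).
      left; exact Hh4. }
  destruct (MVT_gen (fun z => Kf z (t0 + h)) (fun z => Kx z (t0 + h)) (a t0) (a (t0 + h)))
    as [c [Hc Heq]].
  { intros c Hc. apply HK; [lra|]. replace (t0 + h - t0) with h by ring. lra. }
  simpl in Heq.
  assert (HKc' : Rabs (Kx c (t0 + h) - D) < e1).
  { apply Hc1; [lra|]. replace (t0 + h - t0) with h by ring. lra. }
  replace ((Kf (a (t0 + h)) (t0 + h) - Kf (a t0) t0) / h - (D * a' + m)) with
    (((Kx c (t0 + h) - D) * q + D * (q - a')) +
     ((Kf (a t0) (t0 + h) - Kf (a t0) t0) / h - m)).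
  2:{ unfold q. replace (Kf (a (t0 + h)) (t0 + h)) with
        (Kf (a t0) (t0 + h) + Kx c (t0 + h) * (a (t0 + h) - a t0)) by lra.
      field; exact Hh0. }
  eapply Rle_lt_trans; [apply Rabs_triang|].
  assert (Hp1 : Rabs ((Kx c (t0 + h) - D) * q + D * (q - a')) < 2 * eps / 3).
  { eapply Rle_lt_trans; [apply Rabs_triang|]. rewrite !Rabs_mult.
    assert (X1 : Rabs (Kx c (t0 + h) - D) * Rabs q <= e1 * (Rabs a' + 1)).
    { apply Rmult_le_compat; try apply Rabs_pos; lra. }
    assert (X2 : Rabs D * Rabs (q - a') <= Rabs D * e2).
    { apply Rmult_le_compat_l; [apply Rabs_pos| lra]. }
    assert (X3 : e1 * (Rabs a' + 1) = eps / 3) by (unfold e1; field; lra).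
    assert (X4 : Rabs D * e2 < eps / 3).
    { apply Rle_lt_trans with (Rabs D * (eps / (3 * (Rabs D + 1)))).
      - apply Rmult_le_compat_l; [apply Rabs_pos|lra].
      - apply Rmult_lt_reg_r with (3 * (Rabs D + 1)); [lra|].
        replace (Rabs D * (eps / (3 * (Rabs D + 1))) * (3 * (Rabs D + 1))) with
          (Rabs D * eps) by (field; lra).
        nra. }
    lra. }
  simpl in Hdm. lra.
Qed.

Lemma dpl_cont f x l : derivable_pt_lim f x l ->
  forall eps, eps > 0 -> exists d, d > 0 /\ forall y, Rabs (y - x) < d -> Rabs (f y - f x) < eps.
Proof.
  intros H eps Heps.
  assert (Hc : continuity_pt f x) by (apply derivable_continuous_pt; exists l; exact H).
  destruct (Hc eps Heps) as [d [Hd H']]. exists d; split; [lra|].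
  intros y Hy. destruct (Req_dec y x) as [->|Hne].
  - unfold Rminus; rewrite Rplus_opp_r, Rabs_R0; lra.
  - apply (H' y). split; [split; [exact I| auto] | exact Hy].
Qed.

Lemma cont3 (b c d : R -> R) t0 :
  (forall eps, eps > 0 -> exists del, del > 0 /\ forall y, Rabs (y - t0) < del -> Rabs (b y - b t0) < eps) ->
  (forall eps, eps > 0 -> exists del, del > 0 /\ forall y, Rabs (y - t0) < del -> Rabs (c y - c t0) < eps) ->
  (forall eps, eps > 0 -> exists del, del > 0 /\ forall y, Rabs (y - t0) < del -> Rabs (d y - d t0) < eps) ->
  forall r, r > 0 -> exists del, del > 0 /\ forall t, Rabs (t - t0) < del ->
     Rabs (b t - b t0) < r /\ Rabs (c t - c t0) < r /\ Rabs (d t - d t0) < r.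
Proof.
  intros Hb Hc Hd r Hr.
  destruct (Hb r Hr) as [d1 [H1 H1']]; destruct (Hc r Hr) as [d2 [H2 H2']];
  destruct (Hd r Hr) as [d3 [H3 H3']].
  exists (Rmin d1 (Rmin d2 d3)); split; [repeat apply Rmin_pos; lra|].
  intros t Ht.
  pose proof (Rmin_l d1 (Rmin d2 d3)); pose proof (Rmin_r d1 (Rmin d2 d3));
  pose proof (Rmin_l d2 d3); pose proof (Rmin_r d2 d3).
  split; [apply H1'|split; [apply H2'|apply H3']]; lra.
Qed.

Definition c4at (g : R -> R -> R -> R -> R) a b c d :=
  forall eps, eps > 0 -> exists del, del > 0 /\ forall a' b' c' d',
    Rabs (a' - a) < del -> Rabs (b' - b) < del -> Rabs (c' - c) < del ->
    Rabs (d' - d) < del -> Rabs (g a' b' c' d' - g a b c d) < eps.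

Lemma chain4 (g G0 G1 G2 G3 : R -> R -> R -> R -> R) (a b c d : R -> R) t0 a' b' c' d' rho :
  rho > 0 ->
  (forall x y z w, Rabs (x - a t0) < rho -> Rabs (y - b t0) < rho ->
     Rabs (z - c t0) < rho -> Rabs (w - d t0) < rho ->
     derivable_pt_lim (fun h => g h y z w) x (G0 x y z w) /\
     derivable_pt_lim (fun h => g x h z w) y (G1 x y z w) /\
     derivable_pt_lim (fun h => g x y h w) z (G2 x y z w) /\
     derivable_pt_lim (fun h => g x y z h) w (G3 x y z w)) ->
  c4at G0 (a t0) (b t0) (c t0) (d t0) ->
  c4at G1 (a t0) (b t0) (c t0) (d t0) ->
  c4at G2 (a t0) (b t0) (c t0) (d t0) ->
  derivable_pt_lim a t0 a' -> derivable_pt_lim b t0 b' ->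
  derivable_pt_lim c t0 c' -> derivable_pt_lim d t0 d' ->
  derivable_pt_lim (fun t => g (a t) (b t) (c t) (d t)) t0
    (G0 (a t0) (b t0) (c t0) (d t0) * a' + G1 (a t0) (b t0) (c t0) (d t0) * b'
     + G2 (a t0) (b t0) (c t0) (d t0) * c' + G3 (a t0) (b t0) (c t0) (d t0) * d').
Proof.
  intros Hrho HD HC0 HC1 HC2 Ha Hb Hc Hd.
  set (a0 := a t0); set (b0 := b t0); set (c0 := c t0); set (d0 := d t0).
  pose proof (dpl_cont _ _ _ Hb) as Cb; pose proof (dpl_cont _ _ _ Hc) as Cc;
  pose proof (dpl_cont _ _ _ Hd) as Cd.
  pose proof (cont3 b c d t0 Cb Cc Cd) as C3.
  assert (Z : forall x, Rabs (x - x) < rho) by (intro x; unfold Rminus; rewrite Rplus_opp_r, Rabs_R0; lra).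
  assert (S3 : derivable_pt_lim (fun t => g a0 b0 c0 (d t)) t0 (G3 a0 b0 c0 d0 * d')).
  { assert (H := derivable_pt_lim_comp d (fun h => g a0 b0 c0 h) t0 d' (G3 a0 b0 c0 d0) Hd).
    unfold comp in H. apply H.
    apply (HD a0 b0 c0 d0); apply Z. }
  destruct (C3 rho Hrho) as [r [Hr Hr']].
  assert (S2 : derivable_pt_lim (fun t => g a0 b0 (c t) (d t)) t0
                 (G2 a0 b0 c0 d0 * c' + G3 a0 b0 c0 d0 * d')).
  { apply (chainK (fun x t => g a0 b0 x (d t)) (fun x t => G2 a0 b0 x (d t)) c t0 c' _ (Rmin r rho)).
    - apply Rmin_pos; lra.
    - intros x t Hx Ht. pose proof (Rmin_l r rho); pose proof (Rmin_r r rho).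
      destruct (Hr' t) as [_ [_ X]]; [lra|].
      apply (HD a0 b0 x (d t)); try apply Z; unfold a0, b0, c0, d0 in *; lra.
    - intros eps Heps. destruct (HC2 eps Heps) as [del [Hdel Hdel']].
      destruct (C3 del Hdel) as [r2 [Hr2 Hr2']].
      exists (Rmin del r2); split; [apply Rmin_pos; lra|].
      intros x t Hx Ht. pose proof (Rmin_l del r2); pose proof (Rmin_r del r2).
      destruct (Hr2' t) as [_ [_ X]]; [lra|].
      apply Hdel'; try (unfold Rminus; rewrite Rplus_opp_r, Rabs_R0; lra); unfold a0, b0, c0, d0 in *; lra.
    - exact Hc.
    - exact S3. }
  assert (S1 : derivable_pt_lim (fun t => g a0 (b t) (c t) (d t)) t0
                 (G1 a0 b0 c0 d0 * b' + (G2 a0 b0 c0 d0 * c' + G3 a0 b0 c0 d0 * d'))).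
  { apply (chainK (fun x t => g a0 x (c t) (d t)) (fun x t => G1 a0 x (c t) (d t)) b t0 b' _ (Rmin r rho)).
    - apply Rmin_pos; lra.
    - intros x t Hx Ht. pose proof (Rmin_l r rho); pose proof (Rmin_r r rho).
      destruct (Hr' t) as [_ [X1 X]]; [lra|].
      apply (HD a0 x (c t) (d t)); try apply Z; unfold a0, b0, c0, d0 in *; lra.
    - intros eps Heps. destruct (HC1 eps Heps) as [del [Hdel Hdel']].
      destruct (C3 del Hdel) as [r2 [Hr2 Hr2']].
      exists (Rmin del r2); split; [apply Rmin_pos; lra|].
      intros x t Hx Ht. pose proof (Rmin_l del r2); pose proof (Rmin_r del r2).
      destruct (Hr2' t) as [_ [X1 X]]; [lra|].
      apply Hdel'; try (unfold Rminus; rewrite Rplus_opp_r, Rabs_R0; lra); unfold a0, b0, c0, d0 in *; lra.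
    - exact Hb.
    - exact S2. }
  assert (S0 : derivable_pt_lim (fun t => g (a t) (b t) (c t) (d t)) t0
                 (G0 a0 b0 c0 d0 * a' + (G1 a0 b0 c0 d0 * b' + (G2 a0 b0 c0 d0 * c' + G3 a0 b0 c0 d0 * d')))).
  { apply (chainK (fun x t => g x (b t) (c t) (d t)) (fun x t => G0 x (b t) (c t) (d t)) a t0 a' _ (Rmin r rho)).
    - apply Rmin_pos; lra.
    - intros x t Hx Ht. pose proof (Rmin_l r rho); pose proof (Rmin_r r rho).
      destruct (Hr' t) as [X0 [X1 X]]; [lra|].
      apply (HD x (b t) (c t) (d t)); unfold a0, b0, c0, d0 in *; lra.
    - intros eps Heps. destruct (HC0 eps Heps) as [del [Hdel Hdel']].
      destruct (C3 del Hdel) as [r2 [Hr2 Hr2']].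
      exists (Rmin del r2); split; [apply Rmin_pos; lra|].
      intros x t Hx Ht. pose proof (Rmin_l del r2); pose proof (Rmin_r del r2).
      destruct (Hr2' t) as [X0 [X1 X]]; [lra|].
      apply Hdel'; unfold a0, b0, c0, d0 in *; lra.
    - exact Ha.
    - exact S1. }
  replace (G0 a0 b0 c0 d0 * a' + G1 a0 b0 c0 d0 * b' + G2 a0 b0 c0 d0 * c' + G3 a0 b0 c0 d0 * d')
    with (G0 a0 b0 c0 d0 * a' + (G1 a0 b0 c0 d0 * b' + (G2 a0 b0 c0 d0 * c' + G3 a0 b0 c0 d0 * d')))
    by ring.
  exact S0.
Qed.

Definition smooth4 U g := smooth_on 4 (pred4 U) (fun4 g).
Definition smooth2 J F := smooth_on 2 (strip J) (fun2 F).

Lemma sm4_lpd U g i : (i < 4)%nat -> smooth4 U g -> smooth4 U (lpd i g).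
Proof.
  intros Hi H k. destruct (H (S k)) as [_ H2]. destruct (H2 i Hi) as [_ Hk].
  destruct i as [|[|[|[|i]]]]; try lia; exact Hk.
Qed.

Lemma sm4_c4 U g a b c d : open4 U -> smooth4 U g -> U a b c d -> c4at g a b c d.
Proof.
  intros HU Hg Hp eps Heps.
  destruct (HU a b c d Hp) as [rho [Hrho Hrho']].
  destruct (Hg O) as [Hc _].
  destruct (Hc (vec4 a b c d) Hp eps Heps) as [del [Hdel Hdel']].
  exists (Rmin del rho); split; [apply Rmin_pos; lra|].
  intros a' b' c' d' H1 H2 H3 H4.
  pose proof (Rmin_l del rho); pose proof (Rmin_r del rho).
  apply (Hdel' (vec4 a' b' c' d')).
  - unfold pred4; simpl; apply Hrho'; lra.
  - intros i Hi; destruct i as [|[|[|[|i]]]]; simpl; try lia; lra.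
Qed.

Lemma sm4_d4 U g a b c d : smooth4 U g -> U a b c d ->
     derivable_pt_lim (fun h => g h b c d) a (lpd 0 g a b c d) /\
     derivable_pt_lim (fun h => g a h c d) b (lpd 1 g a b c d) /\
     derivable_pt_lim (fun h => g a b h d) c (lpd 2 g a b c d) /\
     derivable_pt_lim (fun h => g a b c h) d (lpd 3 g a b c d).
Proof.
  intros Hg Hp. destruct (Hg 1%nat) as [_ H1].
  repeat split.
  - destruct (H1 0%nat ltac:(lia)) as [Hd _]. destruct (Hd (vec4 a b c d) Hp) as [l Hl].
    exact (dpl_Dr _ _ _ Hl).
  - destruct (H1 1%nat ltac:(lia)) as [Hd _]. destruct (Hd (vec4 a b c d) Hp) as [l Hl].
    exact (dpl_Dr _ _ _ Hl).
  - destruct (H1 2%nat ltac:(lia)) as [Hd _]. destruct (Hd (vec4 a b c d) Hp) as [l Hl].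
    exact (dpl_Dr _ _ _ Hl).
  - destruct (H1 3%nat ltac:(lia)) as [Hd _]. destruct (Hd (vec4 a b c d) Hp) as [l Hl].
    exact (dpl_Dr _ _ _ Hl).
Qed.

Lemma chain_sm4 U g (a b c d : R -> R) t0 a' b' c' d' :
  open4 U -> smooth4 U g -> U (a t0) (b t0) (c t0) (d t0) ->
  derivable_pt_lim a t0 a' -> derivable_pt_lim b t0 b' ->
  derivable_pt_lim c t0 c' -> derivable_pt_lim d t0 d' ->
  derivable_pt_lim (fun t => g (a t) (b t) (c t) (d t)) t0
    (lpd 0 g (a t0) (b t0) (c t0) (d t0) * a' + lpd 1 g (a t0) (b t0) (c t0) (d t0) * b'
     + lpd 2 g (a t0) (b t0) (c t0) (d t0) * c' + lpd 3 g (a t0) (b t0) (c t0) (d t0) * d').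
Proof.
  intros HU Hg Hp Ha Hb Hc Hd.
  destruct (HU _ _ _ _ Hp) as [rho [Hrho Hrho']].
  apply (chain4 g _ _ _ _ a b c d t0 a' b' c' d' rho Hrho); auto.
  - intros x y z w H1 H2 H3 H4. apply (sm4_d4 U); auto.
  - apply (sm4_c4 U); auto. apply sm4_lpd; auto.
  - apply (sm4_c4 U); auto. apply sm4_lpd; auto.
  - apply (sm4_c4 U); auto. apply sm4_lpd; auto.
Qed.

Definition jc (F : R -> R -> R) s t := forall eps, eps > 0 -> exists d, d > 0 /\
  forall s' t', Rabs (s' - s) < d -> Rabs (t' - t) < d -> Rabs (F s' t' - F s t) < eps.

Definition v2 (s t : R) : nat -> R := fun j => match j with 0%nat => s | _ => t end.

Lemma sm2_ds J F : smooth2 J F -> smooth2 J (ds F).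
Proof. intros H k. destruct (H (S k)) as [_ H2]. destruct (H2 0%nat ltac:(lia)) as [_ Hk]. exact Hk. Qed.
Lemma sm2_dt J F : smooth2 J F -> smooth2 J (dt F).
Proof. intros H k. destruct (H (S k)) as [_ H2]. destruct (H2 1%nat ltac:(lia)) as [_ Hk]. exact Hk. Qed.

Lemma sm2_dps J F s t : smooth2 J F -> J t -> derivable_pt_lim (fun s' => F s' t) s (ds F s t).
Proof.
  intros H Ht. destruct (H 1%nat) as [_ H1]. destruct (H1 0%nat ltac:(lia)) as [Hd _].
  destruct (Hd (v2 s t) Ht) as [l Hl]. exact (dpl_Dr _ _ _ Hl).
Qed.
Lemma sm2_dpt J F s t : smooth2 J F -> J t -> derivable_pt_lim (fun t' => F s t') t (dt F s t).
Proof.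
  intros H Ht. destruct (H 1%nat) as [_ H1]. destruct (H1 1%nat ltac:(lia)) as [Hd _].
  destruct (Hd (v2 s t) Ht) as [l Hl]. exact (dpl_Dr _ _ _ Hl).
Qed.

Lemma sm2_jc J F s t : open_itv J -> smooth2 J F -> J t -> jc F s t.
Proof.
  intros [_ [_ HJ]] H Ht eps Heps.
  destruct (HJ t Ht) as [r [Hr Hr']].
  destruct (H O) as [Hc _].
  destruct (Hc (v2 s t) Ht eps Heps) as [del [Hdel Hdel']].
  exists (Rmin del r); split; [apply Rmin_pos; lra|].
  intros s' t' H1 H2. pose proof (Rmin_l del r); pose proof (Rmin_r del r).
  apply (Hdel' (v2 s' t')).
  - unfold strip; simpl; apply Hr'; lra.
  - intros i Hi; destruct i as [|[|i]]; simpl; try lia; lra.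
Qed.

Lemma c2d_of_jc F s t : jc F s t -> continuity_2d_pt F s t.
Proof.
  intros H eps. destruct (H eps (cond_pos eps)) as [d [Hd Hd']].
  exists (mkposreal d Hd). intros u v Hu Hv. apply Hd'; auto.
Qed.

Lemma comp4_c2d (g : R -> R -> R -> R -> R) (F0 F1 F2 F3 : R -> R -> R) s t :
  c4at g (F0 s t) (F1 s t) (F2 s t) (F3 s t) ->
  continuity_2d_pt F0 s t -> continuity_2d_pt F1 s t ->
  continuity_2d_pt F2 s t -> continuity_2d_pt F3 s t ->
  continuity_2d_pt (fun s t => g (F0 s t) (F1 s t) (F2 s t) (F3 s t)) s t.
Proof.
  intros Hg H0 H1 H2 H3 eps.
  destruct (Hg eps (cond_pos eps)) as [d [Hd Hd']].
  destruct (H0 (mkposreal d Hd)) as [d0 K0]; destruct (H1 (mkposreal d Hd)) as [d1 K1];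
  destruct (H2 (mkposreal d Hd)) as [d2 K2]; destruct (H3 (mkposreal d Hd)) as [d3 K3].
  assert (Hm : 0 < Rmin (Rmin d0 d1) (Rmin d2 d3)) by
    (repeat apply Rmin_pos; apply cond_pos).
  exists (mkposreal _ Hm). simpl. intros x y Hx Hy.
  pose proof (Rmin_l (Rmin d0 d1) (Rmin d2 d3)); pose proof (Rmin_r (Rmin d0 d1) (Rmin d2 d3));
  pose proof (Rmin_l d0 d1); pose proof (Rmin_r d0 d1);
  pose proof (Rmin_l d2 d3); pose proof (Rmin_r d2 d3).
  apply Hd'; [apply K0|apply K1|apply K2|apply K3]; lra.
Qed.

Lemma c2d_swap F s t : continuity_2d_pt F s t -> continuity_2d_pt (fun x y => F y x) t s.
Proof.
  intros H eps. destruct (H eps) as [d Hd]. exists d. intros u v Hu Hv. apply Hd; auto.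
Qed.

Lemma c2d_slice F s t : continuity_2d_pt F s t -> continuity_pt (fun x => F x t) s.
Proof.
  intros H eps Heps. destruct (H (mkposreal eps Heps)) as [d Hd].
  exists d; split; [apply cond_pos|]. intros x [_ Hx]. simpl in *. unfold R_dist in *.
  apply Hd; auto. unfold Rminus; rewrite Rplus_opp_r, Rabs_R0; apply cond_pos.
Qed.

Lemma c2d_slice' F s t : continuity_2d_pt F s t -> continuous (fun x => F x t) s.
Proof. intros H. apply continuity_pt_filterlim. apply c2d_slice; auto. Qed.

Lemma dpl_loc_ext (f g : R -> R) x l d : d > 0 ->
  (forall y, Rabs (y - x) < d -> f y = g y) ->
  derivable_pt_lim f x l -> derivable_pt_lim g x l.
Proof.
  intros Hd Heq H eps Heps. destruct (H eps Heps) as [d' Hd'].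
  assert (Hm : 0 < Rmin d d') by (apply Rmin_pos; [lra|apply cond_pos]).
  exists (mkposreal _ Hm). simpl. intros h Hh0 Hh.
  pose proof (Rmin_l d d'); pose proof (Rmin_r d d').
  rewrite <- !Heq.
  - apply Hd'; auto; lra.
  - unfold Rminus; rewrite Rplus_opp_r, Rabs_R0; lra.
  - replace (x + h - x) with h by ring; lra.
Qed.

Lemma dpl_periodic (f : R -> R) L l : (forall x, f (x + L) = f x) ->
  derivable_pt_lim f 0 l -> derivable_pt_lim f L l.
Proof.
  intros Hp H eps Heps. destruct (H eps Heps) as [d Hd]. exists d.
  intros h Hh0 Hh. specialize (Hd h Hh0 Hh).
  replace (f (L + h)) with (f (0 + h)) by (rewrite <- (Hp (0 + h)); f_equal; ring).
  replace (f L) with (f 0) by (rewrite <- (Hp 0); f_equal; ring).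
  exact Hd.
Qed.

Definition CT (g : R -> R -> R -> R -> R) (A u : R -> R -> R) s t :=
  along (lpd 0 g) A u s t * dt A s t + along (lpd 1 g) A u s t * dt (dt A) s t
  + along (lpd 2 g) A u s t * dt (ds A) s t + along (lpd 3 g) A u s t * dt u s t.
Definition CS (g : R -> R -> R -> R -> R) (A u : R -> R -> R) s t :=
  along (lpd 0 g) A u s t * ds A s t + along (lpd 1 g) A u s t * ds (dt A) s t
  + along (lpd 2 g) A u s t * ds (ds A) s t + along (lpd 3 g) A u s t * ds u s t.

Lemma J_loc J t : open_itv J -> J t -> exists d, d > 0 /\ forall t', Rabs (t' - t) < d -> J t'.
Proof. intros [_ [_ H]] Ht. exact (H t Ht). Qed.

Section S.
Context (U : R -> R -> R -> R -> Prop) (J : R -> Prop) (A u : R -> R -> R)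
  (HU : open4 U) (HJ : open_itv J) (HA : smooth2 J A) (Hu : smooth2 J u)
  (HX : forall s t, J t -> U (A s t) (dt A s t) (ds A s t) (u s t)).

Lemma along_dt g s t : smooth4 U g -> J t ->
  derivable_pt_lim (fun t' => along g A u s t') t (CT g A u s t).
Proof.
  intros Hg Ht. unfold along, CT.
  apply (chain_sm4 U g (fun t' => A s t') (fun t' => dt A s t') (fun t' => ds A s t')
     (fun t' => u s t')); auto.
  - apply (sm2_dpt J); auto.
  - apply (sm2_dpt J); auto. apply sm2_dt; auto.
  - apply (sm2_dpt J); auto. apply sm2_ds; auto.
  - apply (sm2_dpt J); auto.
Qed.

Lemma along_ds g s t : smooth4 U g -> J t ->
  derivable_pt_lim (fun s' => along g A u s' t) s (CS g A u s t).
Proof.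
  intros Hg Ht. unfold along, CS.
  apply (chain_sm4 U g (fun s' => A s' t) (fun s' => dt A s' t) (fun s' => ds A s' t)
     (fun s' => u s' t)); auto.
  - apply (sm2_dps J); auto.
  - apply (sm2_dps J); auto. apply sm2_dt; auto.
  - apply (sm2_dps J); auto. apply sm2_ds; auto.
  - apply (sm2_dps J); auto.
Qed.

Lemma sm2_c2d F s t : smooth2 J F -> J t -> continuity_2d_pt F s t.
Proof. intros; apply c2d_of_jc; apply (sm2_jc J); auto. Qed.

Lemma along_c2d g s t : smooth4 U g -> J t -> continuity_2d_pt (along g A u) s t.
Proof.
  intros Hg Ht. unfold along.
  apply comp4_c2d.
  - apply (sm4_c4 U); auto.
  - apply sm2_c2d; auto.
  - apply sm2_c2d; auto. apply sm2_dt; auto.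
  - apply sm2_c2d; auto. apply sm2_ds; auto.
  - apply sm2_c2d; auto.
Qed.

Lemma CT_c2d g s t : smooth4 U g -> J t -> continuity_2d_pt (CT g A u) s t.
Proof.
  intros Hg Ht. unfold CT.
  repeat apply continuity_2d_pt_plus; apply continuity_2d_pt_mult;
    try (apply along_c2d; auto; apply sm4_lpd; auto; lia);
    apply sm2_c2d; auto; repeat first [apply sm2_dt | apply sm2_ds]; auto.
Qed.

Lemma CS_c2d g s t : smooth4 U g -> J t -> continuity_2d_pt (CS g A u) s t.
Proof.
  intros Hg Ht. unfold CS.
  repeat apply continuity_2d_pt_plus; apply continuity_2d_pt_mult;
    try (apply along_c2d; auto; apply sm4_lpd; auto; lia);
    apply sm2_c2d; auto; repeat first [apply sm2_dt | apply sm2_ds]; auto.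
Qed.

Lemma dt_along_eq g s t : smooth4 U g -> J t -> dt (along g A u) s t = CT g A u s t.
Proof. intros; apply Dr_spec; apply along_dt; auto. Qed.
Lemma ds_along_eq g s t : smooth4 U g -> J t -> ds (along g A u) s t = CS g A u s t.
Proof. intros; apply Dr_spec; apply along_ds; auto. Qed.

Lemma dt_along_c2d g s t : smooth4 U g -> J t -> continuity_2d_pt (dt (along g A u)) s t.
Proof.
  intros Hg Ht. destruct (J_loc J t HJ Ht) as [d [Hd Hd']].
  apply continuity_2d_pt_ext_loc with (CT g A u); [|apply CT_c2d; auto].
  exists (mkposreal d Hd); simpl; intros s' t' _ H. rewrite dt_along_eq; auto.
Qed.
Lemma ds_along_c2d g s t : smooth4 U g -> J t -> continuity_2d_pt (ds (along g A u)) s t.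
Proof.
  intros Hg Ht. destruct (J_loc J t HJ Ht) as [d [Hd Hd']].
  apply continuity_2d_pt_ext_loc with (CS g A u); [|apply CS_c2d; auto].
  exists (mkposreal d Hd); simpl; intros s' t' _ H. rewrite ds_along_eq; auto.
Qed.

End S.

Lemma dpl_Derive f x l : derivable_pt_lim f x l -> Derive f x = l.
Proof. intros H. apply is_derive_unique. apply is_derive_Reals. exact H. Qed.

Lemma Schwarz_F J F s t : open_itv J -> smooth2 J F -> J t -> dt (ds F) s t = ds (dt F) s t.
Proof.
  intros HJ HF Ht.
  destruct (J_loc J t HJ Ht) as [d [Hd Hd']].
  assert (Hs := Schwarz F s t).
  assert (L1 : forall z v, J v -> Derive (fun t' => F z t') v = dt F z v).
  { intros z v Hv. apply dpl_Derive. apply (sm2_dpt J); auto. }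
  assert (L2 : forall z v, J v -> Derive (fun s' => F s' v) z = ds F z v).
  { intros z v Hv. apply dpl_Derive. apply (sm2_dps J); auto. }
  assert (Hloc : forall v, Rabs (v - t) < d -> forall w, Rabs (w - v) < d - Rabs (v - t) -> J w).
  { intros v Hv w Hw. apply Hd'. replace (w - t) with ((w - v) + (v - t)) by ring.
    eapply Rle_lt_trans; [apply Rabs_triang|]. lra. }
  assert (D4 : forall z v, Rabs (v - t) < d ->
            derivable_pt_lim (fun w => Derive (fun t0 => F t0 w) z) v (dt (ds F) z v)).
  { intros z v Hv. apply dpl_loc_ext with (fun w => ds F z w) (d - Rabs (v - t)); [lra| |].
    - intros y Hy. symmetry. apply L2. apply (Hloc v); auto.
    - apply (sm2_dpt J); auto. apply sm2_ds; auto. }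
  transitivity (Derive (fun z => Derive (fun t0 => F t0 z) s) t).
  { symmetry. apply dpl_Derive. apply D4. unfold Rminus; rewrite Rplus_opp_r, Rabs_R0; lra. }
  rewrite <- Hs.
  - rewrite (Derive_ext (fun z => Derive (fun t0 => F z t0) t) (fun z => dt F z t)).
    + apply dpl_Derive. apply (sm2_dps J); auto. apply sm2_dt; auto.
    + intros z. apply L1; auto.
  - exists (mkposreal d Hd). simpl. intros x y _ Hy. pose proof (Hd' y Hy) as Jy.
    split; [|split; [|split]].
    + apply ex_derive_Reals_1. exists (ds F x y). apply (sm2_dps J); auto.
    + apply ex_derive_Reals_1. exists (dt F x y). apply (sm2_dpt J); auto.
    + apply ex_derive_ext with (fun z => dt F z y).
      { intros z; rewrite L1; auto. }
      apply ex_derive_Reals_1. exists (ds (dt F) x y). apply (sm2_dps J); auto. apply sm2_dt; auto.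
    + apply ex_derive_Reals_1. exists (dt (ds F) x y). apply D4; auto.
  - apply continuity_2d_pt_ext_loc with (ds (dt F)).
    + exists (mkposreal d Hd). simpl. intros x y _ Hy. symmetry.
      rewrite (Derive_ext (fun z => Derive (fun t0 => F z t0) y) (fun z => dt F z y)).
      * apply dpl_Derive. apply (sm2_dps J); auto. apply sm2_dt; auto.
      * intros z. apply L1; auto.
    + apply c2d_of_jc. apply (sm2_jc J); auto. apply sm2_ds, sm2_dt; auto.
  - apply continuity_2d_pt_ext_loc with (dt (ds F)).
    + exists (mkposreal d Hd). simpl. intros x y _ Hy. symmetry.
      apply dpl_Derive. apply D4; auto.
    + apply c2d_of_jc. apply (sm2_jc J); auto. apply sm2_dt, sm2_ds; auto.
Qed.

Definition ee (l : R -> R -> R -> R -> R) (A u : R -> R -> R) s t :=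
  along (lpd 1 l) A u s t * dt A s t + along (lpd 3 l) A u s t * u s t - along l A u s t.
Definition Et (l : R -> R -> R -> R -> R) (A u : R -> R -> R) s t :=
  dt (along (lpd 1 l) A u) s t * dt A s t + dt (along (lpd 3 l) A u) s t * u s t
  - along (lpd 0 l) A u s t * dt A s t - along (lpd 2 l) A u s t * dt (ds A) s t.
Definition Fl (l : R -> R -> R -> R -> R) (A u p : R -> R -> R) pext s t :=
  - (along (lpd 2 l) A u s t * dt A s t + u s t * u s t * along (lpd 3 l) A u s t
     + (p s t - pext) * A s t * u s t).
Definition Fs (l : R -> R -> R -> R -> R) (A u p : R -> R -> R) pext s t :=
  - ((ds (along (lpd 2 l) A u) s t * dt A s t + along (lpd 2 l) A u s t * ds (dt A) s t)
     + ((ds u s t * u s t + u s t * ds u s t) * along (lpd 3 l) A u s t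
        + u s t * u s t * ds (along (lpd 3 l) A u) s t)
     + (((ds p s t - 0) * A s t + (p s t - pext) * ds A s t) * u s t
        + (p s t - pext) * A s t * ds u s t)).

Section M.
Context (U : R -> R -> R -> R -> Prop) (J : R -> Prop) (A u p : R -> R -> R)
  (l : R -> R -> R -> R -> R) (pext : R)
  (HU : open4 U) (HJ : open_itv J) (HA : smooth2 J A) (Hu : smooth2 J u) (Hp : smooth2 J p)
  (Hl : smooth4 U l)
  (HX : forall s t, J t -> U (A s t) (dt A s t) (ds A s t) (u s t)).

Lemma Hl' i : (i < 4)%nat -> smooth4 U (lpd i l).
Proof. intros; apply sm4_lpd; auto. Qed.

Lemma F1 s t : J t -> derivable_pt_lim (fun t' => ee l A u s t') t (Et l A u s t).
Proof.
  intros Ht.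
  assert (D1 := dpl_Dr _ _ _ (along_dt U J A u HU HA Hu HX (lpd 1 l) s t (Hl' 1 ltac:(lia)) Ht)).
  assert (D3 := dpl_Dr _ _ _ (along_dt U J A u HU HA Hu HX (lpd 3 l) s t (Hl' 3 ltac:(lia)) Ht)).
  assert (D0 := along_dt U J A u HU HA Hu HX l s t Hl Ht).
  assert (DA := sm2_dpt J (dt A) s t (sm2_dt J A HA) Ht).
  assert (Du := sm2_dpt J u s t Hu Ht).
  assert (H := derivable_pt_lim_minus _ _ t _ _
     (derivable_pt_lim_plus _ _ t _ _ (derivable_pt_lim_mult _ _ t _ _ D1 DA)
        (derivable_pt_lim_mult _ _ t _ _ D3 Du)) D0).
  replace (Et l A u s t) with
    (dt (along (lpd 1 l) A u) s t * dt A s t + along (lpd 1 l) A u s t * dt (dt A) s t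
     + (dt (along (lpd 3 l) A u) s t * u s t + along (lpd 3 l) A u s t * dt u s t)
     - CT l A u s t).
  - exact H.
  - unfold Et, CT. ring.
Qed.

Lemma F2 s t : J t -> derivable_pt_lim (fun s' => Fl l A u p pext s' t) s (Fs l A u p pext s t).
Proof.
  intros Ht.
  assert (D2 := dpl_Dr _ _ _ (along_ds U J A u HU HA Hu HX (lpd 2 l) s t (Hl' 2 ltac:(lia)) Ht)).
  assert (D3 := dpl_Dr _ _ _ (along_ds U J A u HU HA Hu HX (lpd 3 l) s t (Hl' 3 ltac:(lia)) Ht)).
  assert (DA := sm2_dps J A s t HA Ht).
  assert (DAt := sm2_dps J (dt A) s t (sm2_dt J A HA) Ht).
  assert (Du := sm2_dps J u s t Hu Ht).
  assert (Dp := sm2_dps J p s t Hp Ht).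
  assert (Dc := derivable_pt_lim_const pext s).
  assert (H := derivable_pt_lim_opp _ s _
    (derivable_pt_lim_plus _ _ s _ _
      (derivable_pt_lim_plus _ _ s _ _
        (derivable_pt_lim_mult _ _ s _ _ D2 DAt)
        (derivable_pt_lim_mult _ _ s _ _ (derivable_pt_lim_mult _ _ s _ _ Du Du) D3))
      (derivable_pt_lim_mult _ _ s _ _
        (derivable_pt_lim_mult _ _ s _ _ (derivable_pt_lim_minus _ _ s _ _ Dp Dc) DA) Du))).
  exact H.
Qed.


Lemma F3 s t : J t ->
  (dt (along (lpd 3 l) A u) s t + u s t * ds (along (lpd 3 l) A u) s t
       + 2 * along (lpd 3 l) A u s t * ds u s t = - A s t * ds p s t) ->
  (dt (along (lpd 1 l) A u) s t + ds (along (lpd 2 l) A u) s t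
       - along (lpd 0 l) A u s t = p s t - pext) ->
  (dt A s t + ds (fun s' t' => A s' t' * u s' t') s t = 0) ->
  Et l A u s t = Fs l A u p pext s t.
Proof.
  intros Ht E1 E2 E3.
  assert (Hm : ds (fun s' t' => A s' t' * u s' t') s t = ds A s t * u s t + A s t * ds u s t).
  { apply Dr_spec. apply (derivable_pt_lim_mult (fun s' => A s' t) (fun s' => u s' t));
      apply (sm2_dps J); auto. }
  assert (Hsw := Schwarz_F J A s t HJ HA Ht).
  assert (X1 : dt (along (lpd 1 l) A u) s t =
     p s t - pext - ds (along (lpd 2 l) A u) s t + along (lpd 0 l) A u s t) by lra.
  assert (X3 : dt (along (lpd 3 l) A u) s t = - A s t * ds p s t
     - u s t * ds (along (lpd 3 l) A u) s t - 2 * along (lpd 3 l) A u s t * ds u s t) by lra.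
  assert (XA : dt A s t = - (ds A s t * u s t + A s t * ds u s t)) by lra.
  unfold Et, Fs. rewrite X1, X3, Hsw. rewrite XA. ring.
Qed.

Lemma ee_c2d s t : J t -> continuity_2d_pt (ee l A u) s t.
Proof.
  intros Ht. unfold ee.
  apply continuity_2d_pt_minus; [apply continuity_2d_pt_plus; apply continuity_2d_pt_mult|].
  - apply (along_c2d U J A u HU HJ HA Hu HX); auto. apply Hl'; lia.
  - apply (sm2_c2d J); auto. apply sm2_dt; auto.
  - apply (along_c2d U J A u HU HJ HA Hu HX); auto. apply Hl'; lia.
  - apply (sm2_c2d J); auto.
  - apply (along_c2d U J A u HU HJ HA Hu HX); auto.
Qed.

Lemma Et_c2d s t : J t -> continuity_2d_pt (Et l A u) s t.
Proof.
  intros Ht. unfold Et.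
  repeat apply continuity_2d_pt_minus; try apply continuity_2d_pt_plus;
    apply continuity_2d_pt_mult;
    first [ apply (dt_along_c2d U J A u HU HJ HA Hu HX); auto; apply Hl'; lia
          | apply (along_c2d U J A u HU HJ HA Hu HX); auto; apply Hl'; lia
          | apply (sm2_c2d J); auto; repeat first [apply sm2_dt | apply sm2_ds]; auto ].
Qed.


Lemma per_gen (F : R -> R -> R) Lp t : smooth2 J F -> J t ->
  (forall s, F (s + Lp) t = F s t) ->
  F Lp t = F 0 t /\ ds F Lp t = ds F 0 t.
Proof.
  intros HF Ht HP. split.
  - rewrite <- (HP 0). f_equal; ring.
  - apply Dr_spec. apply dpl_periodic; [exact HP|]. apply (sm2_dps J); auto.
Qed.

Lemma per_dt Lp t : J t -> (forall s t, J t -> A (s + Lp) t = A s t) ->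
  dt A Lp t = dt A 0 t.
Proof.
  intros Ht HP. destruct (J_loc J t HJ Ht) as [d [Hd Hd']].
  apply Dr_spec. apply dpl_loc_ext with (fun t' => A 0 t') d; auto.
  - intros y Hy. rewrite <- (HP 0 y (Hd' y Hy)). f_equal; ring.
  - apply (sm2_dpt J); auto.
Qed.

Lemma Fl_per Lp t : J t ->
  (forall s t, J t -> A (s + Lp) t = A s t /\ u (s + Lp) t = u s t /\ p (s + Lp) t = p s t) ->
  Fl l A u p pext Lp t = Fl l A u p pext 0 t.
Proof.
  intros Ht HP.
  destruct (per_gen A Lp t HA Ht) as [P1 P2]; [intros s; apply HP; auto|].
  destruct (per_gen u Lp t Hu Ht) as [P3 _]; [intros s; apply HP; auto|].
  destruct (per_gen p Lp t Hp Ht) as [P4 _]; [intros s; apply HP; auto|].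
  assert (P5 : dt A Lp t = dt A 0 t) by (apply per_dt; auto; intros; apply HP; auto).
  unfold Fl, along. rewrite P1, P2, P3, P4, P5. reflexivity.
Qed.

Lemma Ederiv Lp t0 : J t0 ->
  (forall s t, J t -> A (s + Lp) t = A s t /\ u (s + Lp) t = u s t /\ p (s + Lp) t = p s t) ->
  (forall s t, J t ->
     dt (along (lpd 3 l) A u) s t + u s t * ds (along (lpd 3 l) A u) s t
       + 2 * along (lpd 3 l) A u s t * ds u s t
     = - A s t * ds p s t) ->
  (forall s t, J t ->
     dt (along (lpd 1 l) A u) s t + ds (along (lpd 2 l) A u) s t
       - along (lpd 0 l) A u s t
     = p s t - pext) ->
  (forall s t, J t -> dt A s t + ds (fun s' t' => A s' t' * u s' t') s t = 0) ->
  derivable_pt_lim (fun t => RInt (fun s => ee l A u s t) 0 Lp) t0 0.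
Proof.
  intros Ht HP E1 E2 E3.
  destruct (J_loc J t0 HJ Ht) as [d [Hd Hd']].
  apply is_derive_Reals.
  assert (HD : forall s t, J t -> Derive (fun z => ee l A u s z) t = Et l A u s t).
  { intros s t Jt. apply dpl_Derive. apply F1; auto. }
  assert (HR := is_derive_RInt_param (fun x s => ee l A u s x) 0 Lp t0).
  assert (Hz : RInt (fun s => Derive (fun z => ee l A u s z) t0) 0 Lp = 0).
  2:{ assert (K : is_derive (fun t => RInt (fun s => ee l A u s t) 0 Lp) t0
         (RInt (fun s => Derive (fun z => ee l A u s z) t0) 0 Lp)).
      2:{ rewrite Hz in K. exact K. }
   apply HR.
    + exists (mkposreal d Hd). intros y Hy s _. apply ex_derive_Reals_1.
      exists (Et l A u s y). apply F1. apply Hd'. exact Hy.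
    + intros s _. apply continuity_2d_pt_ext_loc with (fun x v => Et l A u v x).
      * exists (mkposreal d Hd). simpl. intros x v Hx _. symmetry. apply HD. apply Hd'; auto.
      * apply c2d_swap. apply Et_c2d; auto.
    + exists (mkposreal d Hd). intros y Hy. apply (ex_RInt_continuous (V := R_CompleteNormedModule)).
      intros z _. apply c2d_slice'. apply ee_c2d. apply Hd'. exact Hy.
  }
  - rewrite (RInt_ext _ (Derive (fun s => Fl l A u p pext s t0))).
    + rewrite RInt_Derive.
      * rewrite Fl_per; auto. apply Rminus_diag_eq. reflexivity.
      * intros x _. apply ex_derive_Reals_1. exists (Fs l A u p pext x t0). apply F2; auto.
      * intros x _. apply continuous_ext with (fun s => Et l A u s t0).
        { intros s. symmetry. rewrite (dpl_Derive _ _ _ (F2 s t0 Ht)).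
          symmetry; apply F3; auto. }
        apply c2d_slice'. apply Et_c2d; auto.
    + intros x _. rewrite HD; auto. rewrite (dpl_Derive _ _ _ (F2 x t0 Ht)).
      apply F3; auto.
Qed.

End M.
Theorem mainTheorem1
  (L pext : R) (U : R -> R -> R -> R -> Prop) (l : R -> R -> R -> R -> R)
  (J : R -> Prop) (A u p : R -> R -> R) :
  L > 0 ->
  open4 U ->
  smooth_on 4 (pred4 U) (fun4 l) ->
  open_itv J ->
  smooth_on 2 (strip J) (fun2 A) ->
  smooth_on 2 (strip J) (fun2 u) ->
  smooth_on 2 (strip J) (fun2 p) ->
  (forall s t, J t -> A (s + L) t = A s t /\ u (s + L) t = u s t /\ p (s + L) t = p s t) ->
  (forall s t, J t -> U (A s t) (dt A s t) (ds A s t) (u s t)) ->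
  (forall s t, J t ->
     dt (along (lpd 3 l) A u) s t + u s t * ds (along (lpd 3 l) A u) s t
       + 2 * along (lpd 3 l) A u s t * ds u s t
     = - A s t * ds p s t) ->
  (forall s t, J t ->
     dt (along (lpd 1 l) A u) s t + ds (along (lpd 2 l) A u) s t
       - along (lpd 0 l) A u s t
     = p s t - pext) ->
  (forall s t, J t -> dt A s t + ds (fun s' t' => A s' t' * u s' t') s t = 0) ->
  forall t1 t2 (h1 : J t1) (h2 : J t2)
    (pr1 : Riemann_integrable
             (fun s => along (lpd 1 l) A u s t1 * dt A s t1
                       + along (lpd 3 l) A u s t1 * u s t1 - along l A u s t1) 0 L)
    (pr2 : Riemann_integrable
             (fun s => along (lpd 1 l) A u s t2 * dt A s t2
                       + along (lpd 3 l) A u s t2 * u s t2 - along l A u s t2) 0 L),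
    RiemannInt pr1 = RiemannInt pr2.
Proof.
  intros HL HU Hl HJ HA Hu Hp Hper HX E1 E2 E3 t1 t2 h1 h2 pr1 pr2.
  rewrite <- (RInt_Reals _ _ _ pr1), <- (RInt_Reals _ _ _ pr2).
  change (smooth4 U l) in Hl. change (smooth2 J A) in HA.
  change (smooth2 J u) in Hu. change (smooth2 J p) in Hp.
  set (Ef := fun t => RInt (fun s => ee l A u s t) 0 L).
  change (Ef t1 = Ef t2).
  assert (HD : forall t, J t -> derivable_pt_lim Ef t 0).
  { intros t Ht. apply (Ederiv U J A u p l pext); auto. }
  destruct HJ as [Hne [Hint Hop]].
  destruct (Rtotal_order t1 t2) as [H|[H|H]].
  - destruct (MVT_cor2 Ef (fun _ => 0) t1 t2 H) as [c [Hc _]].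
    { intros c Hc. apply HD. apply (Hint t1 c t2); auto. }
    lra.
  - subst; reflexivity.
  - destruct (MVT_cor2 Ef (fun _ => 0) t2 t1 H) as [c [Hc _]].
    { intros c Hc. apply HD. apply (Hint t2 c t1); auto. }
    lra.
Qed.
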